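(* Let $0<\lambda\le\Lambda$, let $\Omega \subset \mathbb R\times\mathbb R^d$ be any set, and let $u:\Omega\to\mathbb R$ be a function which at every point of $\Omega$ is twice differentiable in $x$ and differentiable in $t$. The following are equivalent: (1) There exists a function $F$ on real symmetric $d\times d$ matrices, uniformly elliptic with constants $\lambda,\Lambda$, such that $u_t(t,x) = F(D^2u(t,x))$ for all $(t,x)\in\Omega$. (2) For every pair of points $(t,x),(s,y)\in\Omega$, $$P^-\big(D^2u(t,x) - D^2u(s,y)\big) \le u_t(t,x) - u_t(s,y) \le P^+\big(D^2u(t,x)-D^2u(s,y)\big).$$
   Context: A function $F$ on real symmetric $d\times d$ matrices is uniformly elliptic with constants $0<\lambda\le\Lambda$ if for all symmetric $A,B$ with $B \ge 0$, $\lambda \operatorname{tr} B \le F(A+B) - F(A) \le \Lambda \operatorname{tr} B$. The Pucci operators are $P^+(M) = \Lambda \operatorname{tr} M_+ - \lambda \operatorname{tr} M_-$ and $P^-(M) = \lambda \operatorname{tr} M_+ - \Lambda \operatorname{tr} M_-$, where $M=M_+-M_-$ with $M_\pm$ positive semidefinite with orthogonal ranges (positive and negative parts of $M$). *)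

(* Defs.v *)
From HB Require Import structures.
From mathcomp Require Import all_boot all_order all_algebra.
From mathcomp Require Import boolp classical_sets reals topology normedtype derive.
Set Implicit Arguments. Unset Strict Implicit. Unset Printing Implicit Defensive.
Import Order.TTheory GRing.Theory Num.Theory.
Import numFieldNormedType.Exports.
Local Open Scope ring_scope.
Local Open Scope classical_set_scope.

Section Defs.
Variables (R : realType) (d : nat).

Definition symmetric_mx (A : 'M[R]_d) : Prop := A^T = A.

Definition psd_mx (B : 'M[R]_d) : Prop :=
  symmetric_mx B /\ forall v : 'rV[R]_d, 0 <= (v *m B *m v^T) 0 0.

Definition unif_elliptic (lam Lam : R) (F : 'M[R]_d -> R) : Prop :=
  forall A B : 'M[R]_d, symmetric_mx A -> psd_mx B ->
    lam * \tr B <= F (A + B) - F A /\ F (A + B) - F A <= Lam * \tr B.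

Definition posneg_decomp (M P N : 'M[R]_d) : Prop :=
  [/\ psd_mx P, psd_mx N, M = P - N &
      forall x y : 'cV[R]_d, (P *m x)^T *m (N *m y) = 0].

(* the (unique) positive / negative parts of M (chosen; for symmetric M they exist) *)
Definition posneg_parts (M : 'M[R]_d) : 'M[R]_d * 'M[R]_d :=
  xget (0, 0) [set pn | posneg_decomp M pn.1 pn.2].

Definition pos_part (M : 'M[R]_d) := (posneg_parts M).1.
Definition neg_part (M : 'M[R]_d) := (posneg_parts M).2.

Definition pucci_plus (lam Lam : R) (M : 'M[R]_d) : R :=
  Lam * \tr (pos_part M) - lam * \tr (neg_part M).
Definition pucci_minus (lam Lam : R) (M : 'M[R]_d) : R :=
  lam * \tr (pos_part M) - Lam * \tr (neg_part M).

(* f : R^d -> R is (pointwise, second-order Peano) twice differentiable at x,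
   with gradient p and symmetric Hessian M:
   f (x+h) = f x + p.h + 1/2 h^T M h + o(|h|^2). *)
Definition twice_diff_at (f : 'rV[R]_d -> R) (x : 'rV[R]_d)
    (p : 'rV[R]_d) (M : 'M[R]_d) : Prop :=
  symmetric_mx M /\
  forall e : R, 0 < e -> exists r : R, 0 < r /\
    forall h : 'rV[R]_d, (h *m h^T) 0 0 < r ->
      `| f (x + h) - f x - (p *m h^T) 0 0 - 2^-1 * (h *m M *m h^T) 0 0 |
        <= e * (h *m h^T) 0 0.

End Defs.

(* Main.v *)
Require Import Defs.
From HB Require Import structures.
From mathcomp Require Import all_boot all_order all_algebra.
From mathcomp Require Import boolp classical_sets reals topology normedtype derive.
From mathcomp Require Import complex.
From mathcomp Require Import ring lra.
Import Order.TTheory GRing.Theory Num.Theory.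
Import numFieldNormedType.Exports.
Local Open Scope ring_scope.
Local Open Scope classical_set_scope.
Section Spec.
Variable R : realType.
Local Notation f := (real_complex R).

Lemma eig_in_sub n r (M : 'M[R]_n) (B : 'M[R]_(r, n)) : M^T = M -> (0 < r)%N ->
  row_free B -> (B *m M <= B)%MS ->
  exists2 v : 'rV[R]_n, v != 0 & (v <= B)%MS /\ exists mu, v *m M = mu *: v.
Proof.
move=> sM r0 fB sBM.
pose Cm := B *m M *m pinvmx B.
have BC : Cm *m B = B *m M by rewrite mulmxKpV.
have [a /eigenvalueP [w wCa w0]] : exists a, eigenvalue (map_mx f Cm) a.
  have /closed_rootP [a rAa] : size (char_poly (map_mx f Cm)) != 1%N.
    by rewrite size_char_poly; case: (r) r0.
  by exists a; rewrite eigenvalue_root_char.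
pose z := w *m map_mx f B.
have z0 : z != 0 by rewrite /z mulmx_free_eq0 // row_free_map.
have zM : z *m map_mx f M = a *: z.
  by rewrite /z -mulmxA -map_mxM -BC map_mxM mulmxA wCa -scalemxAl.
pose zs := map_mx (@conjc R) z.
have Mr : map_mx (@conjc R) (map_mx f M) = map_mx f M.
  by apply/matrixP => i j; rewrite !mxE conjc_real.
have zsM : zs *m map_mx f M = a^*%C *: zs.
  by rewrite /zs -Mr -map_mxM zM map_mxZ.
have e1 : z *m map_mx f M *m zs^T = a *: (z *m zs^T) by rewrite zM -scalemxAl.
have e2 : z *m map_mx f M *m zs^T = a^*%C *: (z *m zs^T).
  have sMf : (map_mx f M)^T = map_mx f M.
    by apply/matrixP => i j; rewrite !mxE -{1}sM mxE.
  rewrite -mulmxA.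
  have -> : map_mx f M *m zs^T = (zs *m map_mx f M)^T by rewrite trmx_mul sMf.
  by rewrite zsM linearZ /= -scalemxAr.
have q0 : (z *m zs^T) 0 0 != 0.
  rewrite mxE; apply/eqP => /eqP; rewrite psumr_eq0; last first.
    by move=> j _; rewrite !mxE mulcJ_ge0.
  move=> /allP H; move: z0; apply/negP; rewrite negbK; apply/eqP/rowP => j.
  have := H j (mem_index_enum _); rewrite !mxE /= => /eqP/eqP.
  by rewrite mulf_eq0 conjc_eq0 => /orP [] /eqP ->.
have aa : a = a^*%C.
  have : (a - a^*%C) * (z *m zs^T) 0 0 = 0.
    move: (etrans (esym e1) e2) => /(congr1 (fun X : 'M_1 => X 0 0)) /=.
    by rewrite [in X in X = _]mxE [in X in _ = X]mxE mulrBl => ->; rewrite subrr.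
  by move/eqP; rewrite mulf_eq0 (negbTE q0) orbF subr_eq0 => /eqP.
have [mu amu] : exists mu, a = f mu.
  suff H : forall b : R[i], b = b^*%C -> exists mu, b = f mu by apply: H.
  by case=> x y [] /eqP; rewrite -subr_eq0 opprK -mulr2n mulrn_eq0 /= => /eqP ->; exists x.
have : \det (Cm - mu%:M) == 0.
  rewrite -(fmorph_eq0 f) -det_map_mx map_mxB map_scalar_mx.
  apply/det0P; exists w => //; rewrite mulmxBr wCa mul_mx_scalar. by rewrite {1}amu subrr.
move=> /det0P [x x0 xC].
exists (x *m B); first by rewrite mulmx_free_eq0.
split; first exact: submxMl.
exists mu; rewrite -mulmxA -BC mulmxA.
by move/eqP: xC; rewrite mulmxBr mul_mx_scalar subr_eq0 => /eqP ->; rewrite scalemxAl.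
Qed.
Lemma spectral_aux n (M : 'M[R]_n) : M^T = M -> forall k, (k <= n)%N ->
  exists (Q : 'M[R]_(k, n)) (D : 'rV[R]_k),
    Q *m Q^T = 1%:M /\ Q *m M = diag_mx D *m Q.
Proof.
move=> sM; elim=> [|k IH] kn.
  exists 0, 0; split; apply/matrixP => -[] //.
have [Q [D [QQ QM]]] := IH (ltnW kn).
have rQ : \rank Q = k.
  apply/eqP; rewrite eqn_leq rank_leq_row /=.
  by rewrite -{1}(mxrank1 R k) -QQ mxrankM_maxl.
pose W := kermx Q^T.
have rW : \rank W = (n - k)%N by rewrite mxrank_ker mxrank_tr rQ.
pose B := row_base W.
have sWM : (W *m M <= W)%MS.
  apply/sub_kermxP; rewrite -mulmxA.
  have -> : M *m Q^T = Q^T *m diag_mx D.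
    by rewrite -{1}sM -trmx_mul QM trmx_mul tr_diag_mx.
  by rewrite mulmxA (sub_kermxP (submx_refl W)) mul0mx.
have sBM : (B *m M <= B)%MS.
  rewrite (eqmxMr M (eq_row_base W)) (eq_row_base W); exact: sWM.
have [v v0 [vB [mu vM]]] := @eig_in_sub n (\rank W) M B sM
  ltac:(by rewrite rW subn_gt0) (row_base_free W) sBM.
have vQ : v *m Q^T = 0.
  by apply/sub_kermxP; rewrite -(eq_row_base W).
pose c := (v *m v^T) 0 0.
have c0 : 0 < c.
  rewrite /c mxE lt_def; apply/andP; split; last first.
    by apply: sumr_ge0 => j _; rewrite mxE -expr2 sqr_ge0.
  apply/eqP; move=> /eqP; rewrite psumr_eq0; last first.
    by move=> j _; rewrite mxE -expr2 sqr_ge0.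
  move=> /allP H; move: v0; apply/negP; rewrite negbK; apply/eqP/rowP => j.
  have := H j (mem_index_enum _); rewrite !mxE /= => /eqP/eqP.
  by rewrite mulf_eq0 => /orP [] /eqP ->.
pose v' := (Num.sqrt c)^-1 *: v.
have vv : v' *m v'^T = 1%:M.
  apply/matrixP => i j; rewrite !ord1 /v' linearZ /= -scalemxAl -scalemxAr scalerA.
  rewrite [in LHS]mxE -/c [in RHS]mxE /= -expr2 exprVn sqr_sqrtr ?ltW // mulVf ?gt_eqF //.
have vQ' : v' *m Q^T = 0 by rewrite /v' -scalemxAl vQ scaler0.
exists (col_mx v' Q), (row_mx (mu%:M : 'rV_1) D); split.
  have e : col_mx v' Q *m (col_mx v' Q)^T = (1%:M : 'M_(1 + k)).
    rewrite (tr_col_mx v' Q) mul_col_row vv QQ vQ'.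
    have -> : Q *m v'^T = 0 by rewrite -(trmxK Q) -trmx_mul vQ' trmx0.
    by rewrite -scalar_mx_block.
  exact: e.
suff e : col_mx v' Q *m M = diag_mx (row_mx (mu%:M : 'rV_1) D) *m col_mx v' Q by exact: e.
rewrite mul_col_mx QM diag_mx_row mul_block_col !mul0mx addr0 add0r.
congr col_mx.
have -> : diag_mx (mu%:M : 'rV_1) = mu%:M by apply/matrixP => i j; rewrite !ord1 !mxE.
by rewrite mul_scalar_mx /v' -scalemxAl vM !scalerA mulrC.
Qed.

Lemma spectral n (M : 'M[R]_n) : M^T = M ->
  exists (Q : 'M[R]_n) (D : 'rV[R]_n),
    [/\ Q *m Q^T = 1%:M, Q^T *m Q = 1%:M & M = Q^T *m diag_mx D *m Q].
Proof.
move=> sM; have [Q [D [QQ QM]]] := @spectral_aux n M sM n (leqnn n).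
exists Q, D; have QQ' := mulmx1C QQ; split => //.
by rewrite -mulmxA -QM mulmxA QQ' mul1mx.
Qed.

Section Pucci.
Variable n : nat.
Implicit Types (M P N X Y : 'M[R]_n).

Lemma quad_diag (w : 'rV[R]_n) (E : 'rV[R]_n) :
  (w *m diag_mx E *m w^T) 0 0 = \sum_i E 0 i * w 0 i ^+ 2.
Proof.
rewrite mxE; apply: eq_bigr => i _; rewrite mul_mx_diag !mxE; ring.
Qed.

Lemma quad_entry m X (A : 'M[R]_(m, n)) i :
  (A *m X *m A^T) i i = (row i A *m X *m (row i A)^T) 0 0.
Proof.
rewrite tr_row -row_mul !mxE; apply: eq_bigr => j _; rewrite !mxE //.
Qed.

Lemma psd_entry m X (A : 'M[R]_(m, n)) i : psd_mx X -> 0 <= (A *m X *m A^T) i i.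
Proof. by move=> [_ H]; rewrite quad_entry. Qed.

Lemma psd_tr X : psd_mx X -> 0 <= \tr X.
Proof.
move=> pX; rewrite /mxtrace; apply: sumr_ge0 => i _.
by have := @psd_entry n X 1%:M i pX; rewrite mul1mx trmx1 mulmx1.
Qed.

Lemma psd0 : psd_mx (0 : 'M[R]_n).
Proof. by split; [rewrite /symmetric_mx trmx0 | move=> v; rewrite mulmx0 mul0mx mxE]. Qed.

Lemma psdD X Y : psd_mx X -> psd_mx Y -> psd_mx (X + Y).
Proof.
move=> [sX pX] [sY pY]; split; first by rewrite /symmetric_mx linearD /= sX sY.
by move=> v; rewrite mulmxDr mulmxDl mxE addr_ge0.
Qed.

Lemma psd_conj (Q : 'M[R]_n) (E : 'rV[R]_n) :
  (forall i, 0 <= E 0 i) -> psd_mx (Q^T *m diag_mx E *m Q).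
Proof.
move=> E0; split.
  by rewrite /symmetric_mx !trmx_mul trmxK tr_diag_mx mulmxA.
move=> v; rewrite !mulmxA -(mulmxA _ Q) -[Q *m v^T]trmxK trmx_mul trmxK.
by rewrite quad_diag; apply: sumr_ge0 => i _; rewrite mulr_ge0 ?sqr_ge0.
Qed.

Lemma max_split (x : R) :
  (if 0 <= x then x else 0) - (if 0 <= x then 0 else - x) = x /\
  (if 0 <= x then x else 0) * (if 0 <= x then 0 else - x) = 0.
Proof.
by case: ifP => _; split; rewrite ?subr0 ?mulr0 ?sub0r ?opprK ?mul0r.
Qed.

Lemma conj_mul (Q A B : 'M[R]_n) : Q *m Q^T = 1%:M ->
  (Q^T *m A *m Q) *m (Q^T *m B *m Q) = Q^T *m (A *m B) *m Q.
Proof. by move=> QQ; rewrite !mulmxA -(mulmxA _ Q Q^T) QQ mulmx1. Qed.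

Lemma posneg_exists M : symmetric_mx M -> exists P N, posneg_decomp M P N.
Proof.
move=> sM; have [Q [D [QQ QQ' eM]]] := @spectral _ M sM.
pose Dp := \row_i (if 0 <= D 0 i then D 0 i else 0);
  pose Dn := \row_i (if 0 <= D 0 i then 0 else - D 0 i).
have pP : psd_mx (Q^T *m diag_mx Dp *m Q).
  by apply: psd_conj => i; rewrite mxE; case: ifP.
have pN : psd_mx (Q^T *m diag_mx Dn *m Q).
  apply: psd_conj => i; rewrite mxE; case: ifP => // /negbT.
  by rewrite -ltNge oppr_ge0 => /ltW.
exists (Q^T *m diag_mx Dp *m Q), (Q^T *m diag_mx Dn *m Q); split => //.
  rewrite eM -mulmxBl -mulmxBr; congr (_ *m _ *m _); apply/matrixP => i j.
  by rewrite !mxE -mulrnBl (max_split (D 0 i)).1.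
move=> x y; move: pP pN; set P := Q^T *m diag_mx Dp *m Q; set N := Q^T *m diag_mx Dn *m Q.
move=> pP pN; rewrite trmx_mul pP.1 -mulmxA (mulmxA P) /P /N conj_mul // mulmx_diag.
have -> : \row_j (Dp 0 j * Dn 0 j) = 0.
  by apply/rowP => j; rewrite !mxE (max_split (D 0 j)).2.
by rewrite linear0 mulmx0 mul0mx mul0mx mulmx0.
Qed.

Lemma parts_decomp M : symmetric_mx M -> posneg_decomp M (pos_part M) (neg_part M).
Proof.
move=> sM; have [P [N H]] := @posneg_exists M sM.
rewrite /pos_part /neg_part /posneg_parts.
by have := xgetPex (0, 0) (ex_intro (fun pn => posneg_decomp M pn.1 pn.2) (P, N) H).
Qed.

Lemma neg_min M P N P' N' : posneg_decomp M P N -> psd_mx P' -> psd_mx N' ->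
  M = P' - N' -> \tr N <= \tr N'.
Proof.
case=> pP pN eM orth pP' pN' eM'.
have [Q [D [QQ QQ' eN]]] := @spectral _ N pN.1.
have PtN : P^T *m N = 0.
  apply/matrixP => i j; have := orth (delta_mx i 0) (delta_mx j 0).
  rewrite trmx_mul -mulmxA (mulmxA _ N) => /(congr1 (fun X : 'M_1 => X 0 0)).
  by rewrite trmx_delta mulmxA -rowE -colE !mxE => ->.
have NP : N *m P = 0 by rewrite -{1}pN.1 -(trmxK P) -trmx_mul PtN trmx0.
have DQP : diag_mx D *m (Q *m P) = 0.
  have QN : Q *m N = diag_mx D *m Q by rewrite eN !mulmxA QQ mul1mx.
  by rewrite mulmxA -QN -mulmxA NP mulmx0.
pose cj X := Q *m X *m Q^T.
have cjN : cj N = diag_mx D.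
  by rewrite /cj eN !mulmxA QQ mul1mx -mulmxA QQ mulmx1.
have trcj X : \tr (cj X) = \tr X by rewrite /cj mxtrace_mulC mulmxA QQ' mul1mx.
have eNN : N = P - P' + N'.
  have h : P - N = P' - N' by rewrite -eM.
  by rewrite -addrA (addrC (-P')) -opprB -h opprB addrC subrK.
rewrite -(trcj N) -(trcj N') /mxtrace; apply: ler_sum => i _.
have cN : cj N i i = D 0 i by rewrite cjN mxE eqxx mulr1n.
have e : cj N i i = cj P i i - cj P' i i + cj N' i i.
  rewrite {1}eNN /cj !mulmxDr !mulmxN !mulmxDl !mulNmx.
  by rewrite !mxE.
have h1 : 0 <= cj P' i i by apply: psd_entry.
have h2 : 0 <= cj N' i i by apply: psd_entry.
have [Di0|Di0] := eqVneq (D 0 i) 0.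
  by rewrite cN Di0.
have cP : cj P i i = 0.
  rewrite /cj mxE big1 // => j _.
  have := congr1 (fun X : 'M_n => X i j) DQP; rewrite /= mul_diag_mx !mxE.
  by move/eqP; rewrite mulf_eq0 (negbTE Di0) /= => /eqP ->; rewrite mul0r.
rewrite e cP; lra.
Qed.

Lemma symD X Y : symmetric_mx X -> symmetric_mx Y -> symmetric_mx (X + Y).
Proof. by rewrite /symmetric_mx linearD /= => -> ->. Qed.
Lemma symN X : symmetric_mx X -> symmetric_mx (- X).
Proof. by rewrite /symmetric_mx linearN /= => ->. Qed.
Lemma symB X Y : symmetric_mx X -> symmetric_mx Y -> symmetric_mx (X - Y).
Proof. by move=> sX sY; apply: symD => //; apply: symN. Qed.
Lemma trB X Y : \tr (X - Y) = \tr X - \tr Y.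
Proof. by rewrite mxtraceD linearN. Qed.

Arguments symD {X Y}. Arguments symN {X}. Arguments symB {X Y}.
Arguments psdD {X Y}.

Variables lam Lam : R.
Hypothesis lL : lam <= Lam.

Lemma pucci_le M P' N' : symmetric_mx M -> psd_mx P' -> psd_mx N' ->
  M = P' - N' -> pucci_plus lam Lam M <= Lam * \tr P' - lam * \tr N'.
Proof.
move=> sM pP' pN' eM; have dec := @parts_decomp M sM.
have h := @neg_min _ _ _ _ _ dec pP' pN' eM.
case: dec => _ _ eM0 _.
have trs : \tr (pos_part M) - \tr (neg_part M) = \tr P' - \tr N'.
  by rewrite -!trB -eM -eM0.
rewrite /pucci_plus.
have := mulr_ge0 ((eqbRL (subr_ge0 _ _) lL)) ((eqbRL (subr_ge0 _ _) h)).
nra.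
Qed.

Lemma psd_sym X : psd_mx X -> symmetric_mx X.
Proof. by case. Qed.
Arguments psd_sym {X}.

Lemma pucci_incr {X B} : symmetric_mx X -> psd_mx B ->
  lam * \tr B <= pucci_plus lam Lam (X + B) - pucci_plus lam Lam X /\
  pucci_plus lam Lam (X + B) - pucci_plus lam Lam X <= Lam * \tr B.
Proof.
move=> sX pB; have sXB := symD sX (psd_sym pB).
have := @parts_decomp X sX; case=> pP pN eX _.
have := @parts_decomp (X + B) sXB; case=> pP1 pN1 eXB _.
split.
  have := @pucci_le X (pos_part (X + B)) (neg_part (X + B) + B) sX pP1 (psdD pN1 pB)
    ltac:(by rewrite opprD addrA -eXB addrK).
  rewrite mxtraceD /pucci_plus; lra.
have := @pucci_le (X + B) (pos_part X + B) (neg_part X) sXB (psdD pP pB) pN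
  ltac:(by rewrite {1}eX addrAC).
rewrite mxtraceD /pucci_plus; lra.
Qed.

Lemma pucci_subadd {X Y} : symmetric_mx X -> symmetric_mx Y ->
  pucci_plus lam Lam (X + Y) <= pucci_plus lam Lam X + pucci_plus lam Lam Y.
Proof.
move=> sX sY.
have := @parts_decomp X sX; case=> pP pN eX _.
have := @parts_decomp Y sY; case=> pP' pN' eY _.
have := @pucci_le (X + Y) (pos_part X + pos_part Y) (neg_part X + neg_part Y)
  (symD sX sY) (psdD pP pP') (psdD pN pN')
  ltac:(by rewrite {1}eX {1}eY addrACA opprD).
rewrite !mxtraceD /pucci_plus; lra.
Qed.

Lemma pucci0 : pucci_plus lam Lam (0 : 'M[R]_n) <= 0.
Proof.
have := @pucci_le 0 0 0 (psd_sym psd0) psd0 psd0 ltac:(by rewrite subr0).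
by rewrite linear0 !mulr0 subr0.
Qed.

Lemma ell_bound (F : 'M[R]_n -> R) A B : unif_elliptic lam Lam F -> symmetric_mx A -> symmetric_mx B ->
  pucci_minus lam Lam (A - B) <= F A - F B /\ F A - F B <= pucci_plus lam Lam (A - B).
Proof.
move=> HF sA sB.
have := @parts_decomp (A - B) (symB sA sB); case=> pP pN e _.
set P := pos_part (A - B) in pP e *; set N := neg_part (A - B) in pN e *.
set C := B - N.
have sC : symmetric_mx C := symB sB (psd_sym pN).
have eA : F A = F (C + P).
  by congr F; rewrite /C -addrA (addrC (-N)) -e addrC subrK.
have eB : F B = F (C + N) by rewrite /C subrK.
have [h1 h2] := HF C P sC pP; have [h3 h4] := HF C N sC pN.
rewrite eA eB /pucci_minus /pucci_plus -/P -/N; lra.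
Qed.

Lemma construct_F (T : Type) (Om : set T) (c : T -> R) (C : T -> 'M[R]_n) :
  (forall p, Om p -> symmetric_mx (C p)) ->
  (forall p q, Om p -> Om q -> c p - c q <= pucci_plus lam Lam (C p - C q)) ->
  exists F : 'M[R]_n -> R, unif_elliptic lam Lam F /\ forall p, Om p -> c p = F (C p).
Proof.
move=> sC H2.
case: (pselect (exists p, Om p)) => [[p0 Hp0]|Hne]; last first.
  exists (fun M => lam * \tr M); split.
    move=> A B _ pB; rewrite mxtraceD mulrDr; have := psd_tr B pB => h.
    have := mulr_ge0 (eqbRL (subr_ge0 _ _) lL) h.
    split; nra.
  by move=> p Hp; exfalso; apply: Hne; exists p.
pose G M p := c p + pucci_plus lam Lam (M - C p).
pose E M := [set G M p | p in Om].
exists (fun M => inf (E M)).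
have lbE : forall M, symmetric_mx M -> forall p, Om p ->
    c p0 - pucci_plus lam Lam (C p0 - M) <= G M p.
  move=> M sM p Hp; have := H2 p0 p Hp0 Hp.
  have := pucci_subadd (symB (sC p0 Hp0) sM) (symB sM (sC p Hp)).
  have -> : C p0 - M + (M - C p) = C p0 - C p by rewrite addrA subrK.
  rewrite /G; lra.
have hlb : forall M, symmetric_mx M -> has_lbound (E M).
  move=> M sM; exists (c p0 - pucci_plus lam Lam (C p0 - M)) => _ [p Hp <-].
  exact: lbE.
have ne : forall M, E M !=set0 by move=> M; exists (G M p0), p0.
have infle : forall M, symmetric_mx M -> forall p, Om p -> inf (E M) <= G M p.
  by move=> M sM p Hp; apply: (ge_inf (hlb M sM)); exists p.
split.
  move=> A B sA pB; have sAB := symD sA (psd_sym pB).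
  have key : forall p, Om p -> lam * \tr B <= G (A + B) p - G A p /\
      G (A + B) p - G A p <= Lam * \tr B.
    move=> p Hp; rewrite /G.
    have := pucci_incr (symB sA (sC p Hp)) pB.
    have -> : A + B - C p = A - C p + B by rewrite addrAC.
    case=> k1 k2; split; lra.
  split.
    suff : inf (E A) + lam * \tr B <= inf (E (A + B)) by lra.
    apply: lb_le_inf (ne _) _ => _ [p Hp <-].
    have := infle A sA p Hp; case: (key p Hp); lra.
  suff : inf (E (A + B)) - Lam * \tr B <= inf (E A) by lra.
  apply: lb_le_inf (ne _) _ => _ [p Hp <-].
  have := infle (A + B) sAB p Hp; case: (key p Hp); lra.
move=> p Hp; apply/eqP; rewrite eq_le; apply/andP; split.
  apply: lb_le_inf (ne _) _ => _ [q Hq <-]; have := H2 p q Hp Hq; rewrite /G; lra.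
have := infle (C p) (sC p Hp) p Hp; rewrite /G subrr; have := pucci0; lra.
Qed.
End Pucci.
End Spec.

Theorem lemma5p1 (R : realType) (d : nat) (lam Lam : R)
  (Omega : set (R * 'rV[R]_d)) (u : R -> 'rV[R]_d -> R)
  (ut : R -> 'rV[R]_d -> R) (D2u : R -> 'rV[R]_d -> 'M[R]_d) :
  0 < lam -> lam <= Lam ->
  (forall t x, Omega (t, x) -> is_derive t 1 (fun s => u s x) (ut t x)) ->
  (forall t x, Omega (t, x) ->
     exists p : 'rV[R]_d, twice_diff_at (u t) x p (D2u t x)) ->
  (exists F : 'M[R]_d -> R, unif_elliptic lam Lam F /\
     forall t x, Omega (t, x) -> ut t x = F (D2u t x))
  <->
  (forall t x s y, Omega (t, x) -> Omega (s, y) ->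
     pucci_minus lam Lam (D2u t x - D2u s y) <= ut t x - ut s y /\
     ut t x - ut s y <= pucci_plus lam Lam (D2u t x - D2u s y)).
Proof.
move=> lam0 lL _ H2d.
have sD : forall t x, Omega (t, x) -> symmetric_mx (D2u t x).
  by move=> t x /H2d [p [s _]].
split.
  case=> F [HF HFu] t x s y Hx Hy; rewrite (HFu t x Hx) (HFu s y Hy).
  exact: (@ell_bound R d lam Lam F _ _ HF (sD t x Hx) (sD s y Hy)).
move=> H.
have Ep : forall p, Omega p -> Omega (p.1, p.2) by case.
have [F [HF HFv]] := @construct_F R d lam Lam lL _ Omega (fun p => ut p.1 p.2)
  (fun p => D2u p.1 p.2) (fun p Hp => sD p.1 p.2 (Ep p Hp))
  (fun p q Hp Hq => (H p.1 p.2 q.1 q.2 (Ep p Hp) (Ep q Hq)).2).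
by exists F; split => // t x Hx; apply: (HFv (t, x) Hx).
Qed.
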